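(* Let $k=2r$ with $r\ge1$, $G=BS(1,k)$, and $m>0$. Let $\mathcal{A}_m$ be the set of words $a^{x_0}ta^{x_1}t\cdots a^{x_{m-1}}t$ ($x_i\in\mathbb{Z}$) satisfying: (1) $|x_i|\le r$ for all $i$; (2) for each $i$, if $x_{i-1}=r$ then $0\le x_i<r$, and if $x_{i-1}=-r$ then $-r<x_i\le0$ (with the convention $x_{-1}=x_{m-1}$); (3) if $m$ is even, the words $(a^{-(r-1)}ta^{-r}t)^{m/2}$ and $(a^{-r}ta^{-(r-1)}t)^{m/2}$ are excluded. Then two words in $\mathcal{A}_m$ represent conjugate elements of $G$ if and only if they are cyclic permutations of each other, and every word in $\mathcal{A}_m$ is a conjugacy geodesic.
   Context: $BS(1,k)=\langle a,t\mid tat^{-1}=a^k\rangle$. $a^x$ denotes $|x|$ copies of $a$ or $a^{-1}$ according to the sign of $x$. Word length is with respect to $\{a,t\}$. A word is a conjugacy geodesic if it is a geodesic word and the element it represents has minimal length among all elements of its conjugacy class. *)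

(* Defs.v *)
From mathcomp Require Import all_boot all_order all_algebra.
Set Implicit Arguments. Unset Strict Implicit. Unset Printing Implicit Defensive.
Import Order.TTheory GRing.Theory Num.Theory.

Inductive letter := LA | LAi | LT | LTi.

Definition linv (x : letter) : letter :=
  match x with LA => LAi | LAi => LA | LT => LTi | LTi => LT end.

Definition word := seq letter.

Definition winv (w : word) : word := rev (map linv w).

(* Equality of elements of BS(1,k) represented by words: the congruence on
   words generated by free cancellation x x^-1 = 1 and the relator t a t^-1 = a^k. *)
Inductive bs_eq (k : nat) : word -> word -> Prop :=
| bs_refl w : bs_eq k w w
| bs_sym u v : bs_eq k u v -> bs_eq k v u
| bs_trans u v w : bs_eq k u v -> bs_eq k v w -> bs_eq k u w
| bs_ctx p s u v : bs_eq k u v -> bs_eq k (p ++ u ++ s) (p ++ v ++ s)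
| bs_free x : bs_eq k [:: x; linv x] [::]
| bs_rel : bs_eq k [:: LT; LA; LTi] (nseq k LA).

Definition geodesic (k : nat) (w : word) : Prop :=
  forall v, bs_eq k w v -> size w <= size v.

Definition conj_words (k : nat) (w v : word) : Prop :=
  exists u, bs_eq k (u ++ w ++ winv u) v.

Definition conj_geodesic (k : nat) (w : word) : Prop :=
  geodesic k w /\ forall v, conj_words k w v -> size w <= size v.

Definition cyc_perm (w v : word) : Prop := exists n, v = rot n w.

Definition apow (x : int) : word :=
  if (0 <= x)%R then nseq `|x|%N LA else nseq `|x|%N LAi.

Definition wordof (xs : seq int) : word := flatten [seq apow x ++ [:: LT] | x <- xs].

Definition Am_exps (r m : nat) (xs : seq int) : Prop :=
  [/\ size xs = m,
      (forall i, i < m -> (`|(nth 0%R xs i)| <= (Posz r))%R),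
      (forall i, i < m ->
         let p := nth 0%R xs ((i + m - 1) %% m) in
         (p = (Posz r) -> (0 <= (nth 0%R xs i) < (Posz r))%R) /\
         (p = (- (Posz r))%R -> (- (Posz r) < (nth 0%R xs i) <= 0)%R)) &
      (~~ odd m ->
         xs <> mkseq (fun i => if odd i then (- (Posz r))%R else (- ((Posz r) - 1))%R) m /\
         xs <> mkseq (fun i => if odd i then (- ((Posz r) - 1))%R else (- (Posz r))%R) m)].

Definition Am (r m : nat) (w : word) : Prop :=
  exists xs, Am_exps r m xs /\ w = wordof xs.

(* Main.v *)
Require Import Defs.
From mathcomp Require Import all_boot all_order all_algebra.
From mathcomp Require Import zify ring lra.
Set Implicit Arguments. Unset Strict Implicit. Unset Printing Implicit Defensive.
Import Order.TTheory GRing.Theory Num.Theory.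
Local Open Scope ring_scope.

Fixpoint Bv (K : int) (m h : nat) (w : word) : int :=
  match w with
  | [::] => 0
  | LA :: w' => K ^+ (h %% m) + Bv K m h w'
  | LAi :: w' => - K ^+ (h %% m) + Bv K m h w'
  | LT :: w' => Bv K m h.+1 w'
  | LTi :: w' => Bv K m (h + m.-1)%N w'
  end.

Fixpoint hoff (m : nat) (w : word) : nat :=
  match w with
  | [::] => 0
  | LT :: w' => (hoff m w').+1
  | LTi :: w' => (m.-1 + hoff m w')%N
  | _ :: w' => hoff m w'
  end.

Fixpoint tsum (w : word) : int :=
  match w with
  | [::] => 0
  | LT :: w' => 1 + tsum w'
  | LTi :: w' => -1 + tsum w'
  | _ :: w' => tsum w'
  end.

Fixpoint na (w : word) : nat :=
  match w with
  | [::] => 0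
  | LA :: w' => (na w').+1
  | LAi :: w' => (na w').+1
  | _ :: w' => na w'
  end.

Definition eqm (N a b : int) := exists q : int, a - b = q * N.

Lemma eqm_refl N a : eqm N a a.
Proof. by exists 0; rewrite subrr mul0r. Qed.
Lemma eqm_sym N a b : eqm N a b -> eqm N b a.
Proof. by case=> q h; exists (- q); rewrite mulNr -h opprB. Qed.
Lemma eqm_trans N a b c : eqm N a b -> eqm N b c -> eqm N a c.
Proof. by case=> q h [q' h']; exists (q + q'); rewrite mulrDl -h -h'; ring. Qed.
Lemma eqmD N a b c d : eqm N a b -> eqm N c d -> eqm N (a + c) (b + d).
Proof. by case=> q h [q' h']; exists (q + q'); rewrite mulrDl -h -h'; ring. Qed.
Lemma eqmM N a b c : eqm N a b -> eqm N (c * a) (c * b).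
Proof. by case=> q h; exists (c * q); rewrite -mulrA -h; ring. Qed.
Lemma eqm_eq N a b : a = b -> eqm N a b.
Proof. by move=> ->; apply: eqm_refl. Qed.

Lemma powmod (K : int) m a : (0 < m)%N -> eqm (K ^+ m - 1) (K ^+ a) (K ^+ (a %% m)).
Proof.
move=> hm; rewrite {1}(divn_eq a m) exprD mulnC exprM.
have [s hs] : exists s, (K ^+ m) ^+ (a %/ m) - 1 = s * (K ^+ m - 1).
  exists (\sum_(i < a %/ m) (K ^+ m) ^+ ((a %/ m).-1 - i) * 1 ^+ i).
  by rewrite -{1}(expr1n _ (a %/ m)) subrXX mulrC.
exists (s * K ^+ (a %% m)).
have -> : (K ^+ m) ^+ (a %/ m) = s * (K ^+ m - 1) + 1 by rewrite -hs; ring.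
ring.
Qed.

Lemma hoff_cat m p s : hoff m (p ++ s) = (hoff m p + hoff m s)%N.
Proof. elim: p => [|[] p IH] /=; rewrite ?IH; lia. Qed.

Lemma tsum_cat p s : tsum (p ++ s) = tsum p + tsum s.
Proof. elim: p => [|[] p IH] /=; rewrite ?IH; lia. Qed.

Lemma na_cat p s : na (p ++ s) = (na p + na s)%N.
Proof. elim: p => [|[] p IH] /=; rewrite ?IH; lia. Qed.

Lemma Bv_mod K m h w : Bv K m h w = Bv K m (h %% m) w.
Proof.
elim: w h => [|[] w IH] h //=; rewrite ?modn_mod ?(IH h) //.
- rewrite (IH h.+1) (IH (h %% m).+1). by rewrite -[(h %% m).+1]addn1 modnDml addn1.
- by rewrite (IH (h + _)%N) (IH (h %% m + _)%N) modnDml.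
Qed.

Lemma Bv_cat K m h p s : Bv K m h (p ++ s) = Bv K m h p + Bv K m (h + hoff m p) s.
Proof.
elim: p h => [|[] p IH] h /=; rewrite ?addn0 ?add0r // IH ?addrA //.
- by rewrite addSnnS.
- by rewrite addnA.
Qed.

Lemma Bv_shift K m h d w : Bv K m (h + d * m) w = Bv K m h w.
Proof. by rewrite Bv_mod addnC modnMDl -Bv_mod. Qed.

Lemma Bv_nseqA K m h n : Bv K m h (nseq n LA) = n%:Z * K ^+ (h %% m).
Proof. elim: n => [|n IH] /=; rewrite ?mul0r // IH; lia. Qed.
Lemma Bv_nseqAi K m h n : Bv K m h (nseq n LAi) = - (n%:Z * K ^+ (h %% m)).
Proof. elim: n => [|n IH] /=; rewrite ?mul0r ?oppr0 // IH; lia. Qed.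
Lemma hoff_nseqA m n : hoff m (nseq n LA) = 0%N.
Proof. by elim: n. Qed.
Lemma hoff_nseqAi m n : hoff m (nseq n LAi) = 0%N.
Proof. by elim: n. Qed.
Lemma tsum_nseqA n : tsum (nseq n LA) = 0.
Proof. by elim: n. Qed.
Lemma tsum_nseqAi n : tsum (nseq n LAi) = 0.
Proof. by elim: n. Qed.

Lemma bs_sound r m u v : (0 < m)%N -> bs_eq (2 * r) u v ->
  [/\ forall h, eqm (((2 * r)%:Z) ^+ m - 1) (Bv (2 * r)%:Z m h u) (Bv (2 * r)%:Z m h v),
      (hoff m u = hoff m v %[mod m])%N & tsum u = tsum v].
Proof.
move=> hm; set K := (2 * r)%:Z; set N := K ^+ m - 1.
elim=> {u v}.
- by move=> w; split=> // h; apply: eqm_refl.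
- move=> u v _ [h1 h2 h3]; split=> //; first by move=> h; apply: eqm_sym.
- move=> u v w _ [h1 h2 h3] _ [h1' h2' h3']; split.
  + by move=> h; apply: eqm_trans (h1 h) (h1' h).
  + by rewrite h2.
  + by rewrite h3.
- move=> p s u v _ [h1 h2 h3]; split.
  + move=> h; rewrite !Bv_cat; apply: eqmD; first exact: eqm_refl.
    apply: eqmD; first exact: h1.
    rewrite Bv_mod [in X in eqm _ _ X]Bv_mod.
    rewrite -modnDmr -[in X in eqm _ _ X]modnDmr h2.
    exact: eqm_refl.
  + by rewrite !hoff_cat addnCA [in RHS]addnCA -modnDml h2 modnDml.
  + by rewrite !tsum_cat h3.
- case; split=> //; try (move=> h /=; apply: eqm_eq; ring).
  1,2: by rewrite /= ?addn0 ?addn1 ?prednK // modnn mod0n.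
- split.
  + move=> h; rewrite /= Bv_nseqA addr0.
    rewrite -[(2 * r)%:Z]expr1 -exprD.
    apply: eqm_sym; apply: eqm_trans (powmod _ _ hm) _.
    by rewrite addnC modnDml addn1; apply: eqm_refl.
  + by rewrite /= hoff_nseqA addn0 prednK // modnn mod0n.
  + by rewrite /= tsum_nseqA.
Qed.
Lemma linvK x : linv (linv x) = x.
Proof. by case: x. Qed.

Lemma winv_cons x u : winv (x :: u) = winv u ++ [:: linv x].
Proof. by rewrite /winv /= rev_cons cats1. Qed.

Lemma winvK u : winv (winv u) = u.
Proof.
rewrite /winv map_rev revK -map_comp.
by rewrite (eq_map (g := id)) ?map_id // => x /=; rewrite linvK.
Qed.

Lemma winv_cat u v : winv (u ++ v) = winv v ++ winv u.
Proof. by rewrite /winv map_cat rev_cat. Qed.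

Lemma bs_cancel k u : bs_eq k (u ++ winv u) [::].
Proof.
elim: u => [|x u IH] /=; first exact: bs_refl.
rewrite winv_cons.
apply: bs_trans (bs_free k x).
have := bs_ctx [:: x] [:: linv x] IH.
by rewrite /= -catA.
Qed.

Lemma cyc_conj k w1 w2 : cyc_perm w1 w2 -> conj_words k w1 w2.
Proof.
case=> n ->; rewrite /rot.
set p := take n w1; set s := drop n w1.
exists (winv p).
rewrite winvK -{1}(cat_take_drop n w1) -/p -/s.
have := bs_ctx [::] (s ++ p) (bs_cancel k (winv p)).
by rewrite winvK /= !catA.
Qed.

Lemma tsum_winv u : tsum (winv u) = - tsum u.
Proof.
elim: u => [|x u IH] //; rewrite winv_cons tsum_cat IH.
by case: x => /=; lia.
Qed.

Lemma size_ge v : (na v)%:Z + tsum v <= (size v)%:Z.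
Proof. elim: v => [|[] v IH] /=; lia. Qed.

Lemma wordof_cons x xs : wordof (x :: xs) = apow x ++ LT :: wordof xs.
Proof. by rewrite /wordof /= -catA. Qed.

Lemma wordof_cat xs ys : wordof (xs ++ ys) = wordof xs ++ wordof ys.
Proof. by rewrite /wordof map_cat flatten_cat. Qed.

Lemma wordof_rot n xs : wordof (rot n xs) = rot (size (wordof (take n xs))) (wordof xs).
Proof.
have e : wordof xs = wordof (take n xs) ++ wordof (drop n xs).
  by rewrite -wordof_cat cat_take_drop.
by rewrite {1}/rot wordof_cat e rot_size_cat.
Qed.

Lemma Bv_apow K m h x : Bv K m h (apow x) = x * K ^+ (h %% m).
Proof.
rewrite /apow; case: ifP => hx.
- by rewrite Bv_nseqA gez0_abs.
- have hx' : x < 0 by rewrite ltNge hx.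
  by rewrite Bv_nseqAi ltz0_abs // mulNr opprK.
Qed.

Lemma hoff_apow m x : hoff m (apow x) = 0%N.
Proof. by rewrite /apow; case: ifP => _; rewrite ?hoff_nseqA ?hoff_nseqAi. Qed.
Lemma tsum_apow x : tsum (apow x) = 0.
Proof. by rewrite /apow; case: ifP => _; rewrite ?tsum_nseqA ?tsum_nseqAi. Qed.
Lemma size_apow x : size (apow x) = `|x|%N.
Proof. by rewrite /apow; case: ifP => _; rewrite size_nseq. Qed.

Lemma Bv_wordof K m h xs :
  Bv K m h (wordof xs) = \sum_(i < size xs) xs`_i * K ^+ ((h + i) %% m).
Proof.
elim: xs h => [|x xs IH] h; first by rewrite big_ord0.
rewrite wordof_cons Bv_cat hoff_apow addn0 /= IH big_ord_recl /= Bv_apow addn0.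
congr (_ + _); apply: eq_bigr => i _; by rewrite addSnnS.
Qed.

Lemma hoff_wordof m xs : hoff m (wordof xs) = size xs.
Proof. elim: xs => [|x xs IH] //; by rewrite wordof_cons hoff_cat hoff_apow /= IH. Qed.
Lemma tsum_wordof xs : tsum (wordof xs) = (size xs)%:Z.
Proof. elim: xs => [|x xs IH] //; rewrite wordof_cons tsum_cat tsum_apow /= IH; lia. Qed.

Lemma size_wordof xs :
  (size (wordof xs))%:Z = (size xs)%:Z + \sum_(i < size xs) `|xs`_i|.
Proof.
elim: xs => [|x xs IH]; first by rewrite big_ord0.
rewrite wordof_cons size_cat /= big_ord_recl /= size_apow.
rewrite (eq_bigr (fun i : 'I_ _ => `|xs`_i|)) //.
move: IH; rewrite -!abszE; set S := \sum_(i < _) _; lia.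
Qed.

Fixpoint dg (m h : nat) (w : word) (i : nat) : int :=
  match w with
  | [::] => 0
  | LA :: w' => (((h %% m)%N == i) : nat)%:Z + dg m h w' i
  | LAi :: w' => - (((h %% m)%N == i) : nat)%:Z + dg m h w' i
  | LT :: w' => dg m h.+1 w' i
  | LTi :: w' => dg m (h + m.-1)%N w' i
  end.

Lemma sum_ind m j (F : nat -> int) : (j < m)%N ->
  \sum_(i < m) ((j == i) : nat)%:Z * F i = F j.
Proof.
move=> hj; rewrite (bigD1 (Ordinal hj)) //= eqxx mul1r big1 ?addr0 //.
move=> i /negbTE hi; suff -> : (j == i) = false by rewrite mul0r.
by apply/negbTE; apply: contraFN hi => /eqP hji; apply/eqP/val_inj.
Qed.

Lemma Bv_dg K m h w : (0 < m)%N ->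
  Bv K m h w = \sum_(i < m) dg m h w i * K ^+ i.
Proof.
move=> hm; elim: w h => [|[] w IH] h /=.
- by rewrite big1 // => i _; rewrite mul0r.
- rewrite IH -(sum_ind (fun i => K ^+ i) (ltn_pmod h hm)) -big_split /=.
  by apply: eq_bigr => i _; rewrite mulrDl.
- rewrite IH -[K ^+ _](sum_ind (fun i => K ^+ i) (ltn_pmod h hm)) -sumrN -big_split /=.
  by apply: eq_bigr => i _; rewrite mulrDl mulNr.
- exact: IH.
- exact: IH.
Qed.

Lemma sum_step m j (F G : nat -> int) : (j < m)%N ->
  (forall i, `|F i| <= ((j == i) : nat)%:Z + `|G i|) ->
  \sum_(i < m) `|F i| <= 1 + \sum_(i < m) `|G i|.
Proof.
move=> hj hFG.
apply: le_trans (_ : \sum_(i < m) (((j == i) : nat)%:Z * 1 + `|G i|) <= _).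
  by apply: ler_sum => i _; rewrite mulr1.
by rewrite big_split /= (sum_ind (fun _ => 1)).
Qed.

Lemma dg_cost m h w : (0 < m)%N -> \sum_(i < m) `|dg m h w i| <= (na w)%:Z.
Proof.
move=> hm; elim: w h => [|[] w IH] h /=.
- by rewrite big1 // => i _; rewrite normr0.
- apply: le_trans (sum_step (F := fun i => ((h %% m)%N == i)%:Z + dg m h w i) (G := dg m h w) (ltn_pmod h hm) _) _.
    by move=> i; apply: le_trans (ler_normD _ _) _; lia.
  have := IH h; move: (\sum_(i < m) `|dg m h w i|) => S; lia.
- apply: le_trans (sum_step (F := fun i => - ((h %% m)%N == i)%:Z + dg m h w i) (G := dg m h w) (ltn_pmod h hm) _) _.
    by move=> i; apply: le_trans (ler_normD _ _) _; rewrite normrN; lia.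
  have := IH h; move: (\sum_(i < m) `|dg m h w i|) => S; lia.
- exact: IH.
- exact: IH.
Qed.

Definition Af (R c z : int) : int :=
  `|c| - (((c == 1) && (z == - R)) : nat)%:Z - (((c == -1) && (z == R)) : nat)%:Z.

Lemma ptw (R zp z ci co : int) : 1 <= R -> `|zp| <= R -> `|z| <= R ->
  (zp = R -> 0 <= z < R) -> (zp = - R -> - R < z <= 0) ->
  Af R co z - Af R ci zp <= `|z + 2 * R * co - ci| - `|z|.
Proof.
move=> hR hzp hz h1 h2; rewrite /Af.
have -> : 2 * R * co = 2 * (R * co) by ring.
have [hco|[hco|hco]] : 2 <= co \/ co <= -2 \/ (-1 <= co <= 1) by lia.
- have hA : 2 * R <= R * co by nia.
  have hB : co + R - 1 <= R * co by nia.
  move: hA hB; set P := R * co => hA hB.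
  lia.
- have hA : R * co <= - 2 * R by nia.
  have hB : R * co <= co - R + 1 by nia.
  move: hA hB; set P := R * co => hA hB.
  lia.
- have : co = -1 \/ co = 0 \/ co = 1 by lia.
  case=> [->|[->|->]]; rewrite ?mulr0 ?mulrN1 ?mulr1; lia.
Qed.

Definition per (m : nat) (f : nat -> int) := forall i, f i = f (i %% m)%N.

Definition cycOK (r : nat) (f : nat -> int) :=
  [/\ forall i, `|f i| <= r%:Z,
      forall i, f i = r%:Z -> 0 <= f i.+1 < r%:Z &
      forall i, f i = - r%:Z -> - r%:Z < f i.+1 <= 0].

Definition NotAlt (r : nat) (f : nat -> int) :=
  ~ (forall i, (f i = - r%:Z \/ f i = 1 - r%:Z) /\ f i + f i.+1 = 1 - 2 * r%:Z).

Fixpoint ecar (K q : int) (m : nat) (d : nat -> int) (n : nat) : int :=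
  match n with
  | 0 => q
  | n'.+1 => K * ecar K q m d n' - d (m - n)%N
  end.

Lemma ecar_inv K q m d n : (n <= m)%N ->
  \sum_(0 <= i < m) d i * K ^+ i = q * (K ^+ m - 1) ->
  \sum_(0 <= i < m - n) d i * K ^+ i = K ^+ (m - n) * ecar K q m d n - q.
Proof.
move=> + hs; elim: n => [|n IH] hn /=.
- by rewrite subn0 hs; ring.
- have hi : (m - n = (m - n.+1).+1)%N by lia.
  move: (IH (ltnW hn)); rewrite hi big_nat_recr //= => e.
  have -> : \sum_(0 <= i < m - n.+1) d i * K ^+ i =
     K ^+ (m - n.+1).+1 * ecar K q m d n - q - d (m - n.+1)%N * K ^+ (m - n.+1).
    by rewrite -e; ring.
  rewrite exprS; ring.
Qed.

Lemma carries K m (d : nat -> int) q : (0 < m)%N ->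
  \sum_(i < m) d i * K ^+ i = q * (K ^+ m - 1) ->
  exists c : nat -> int, [/\ c 0%N = q, per m c &
     forall i, (i < m)%N -> K * c i.+1 = c i + d i].
Proof.
move=> hm hs.
have hs' : \sum_(0 <= i < m) d i * K ^+ i = q * (K ^+ m - 1) by rewrite big_mkord.
have em : ecar K q m d m = q.
  have := ecar_inv (leqnn m) hs'; rewrite subnn big_geq // expr0 mul1r.
  by move=> h; apply/eqP; rewrite -subr_eq0 -h.
exists (fun i => ecar K q m d (m - i %% m)); split.
- by rewrite mod0n subn0.
- by move=> i /=; rewrite modn_mod.
- move=> i hi /=; rewrite (modn_small hi).
  have [hi1|hi1] := ltnP i.+1 m.
  + rewrite (modn_small hi1).
    have -> : (m - i = (m - i.+1).+1)%N by lia.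
    rewrite /=; have -> : (m - (m - i.+1).+1 = i)%N by lia.
    ring.
  + have e1 : i.+1 = m by lia.
    rewrite e1 modnn subn0 em.
    have -> : (m - i = 1)%N by lia.
    rewrite /= subn1 -e1 /=; ring.
Qed.

Lemma geo (K : int) m : (K - 1) * \sum_(i < m) K ^+ i = K ^+ m - 1.
Proof.
elim: m => [|m IH]; first by rewrite big_ord0 expr0; ring.
by rewrite big_ord_recr /= mulrDr IH exprS; ring.
Qed.

Lemma minimal r m (z d : nat -> int) : (0 < m)%N -> (1 <= r)%N -> per m z -> cycOK r z ->
  eqm (((2 * r)%:Z) ^+ m - 1) (\sum_(i < m) d i * ((2 * r)%:Z) ^+ i)
                             (\sum_(i < m) z i * ((2 * r)%:Z) ^+ i) ->
  \sum_(i < m) `|z i| <= \sum_(i < m) `|d i|.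
Proof.
move=> hm hr hz [c1 c2 c3] [q hq].
set K := (2 * r)%:Z in hq *; set R := r%:Z.
have hK : K = 2 * R by rewrite /K /R PoszM.
have hs : \sum_(i < m) (d i - z i) * K ^+ i = q * (K ^+ m - 1).
  by rewrite -hq -sumrB; apply: eq_bigr => i _; rewrite mulrBl.
have [c [c0 cp crel]] := carries (d := fun i => d i - z i) hm hs.
set g := fun i => Af R (c i) (z (i + m.-1)%N).
have hg : forall i, z (i.+1 + m.-1)%N = z i.
  by move=> i; rewrite hz addSnnS prednK // modnDr -hz.
have key : forall i : 'I_m, g i.+1 - g i <= `|d i| - `|z i|.
  move=> [i hi] /=; rewrite /g hg.
  have -> : d i = z i + 2 * R * c i.+1 - c i by have := crel i hi; rewrite hK; lia.
  apply: ptw; rewrite /R; try lia.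
  - exact: c1.
  - exact: c1.
  - by move=> h; have := c2 _ h; rewrite -addnS prednK // hz modnDr -hz.
  - by move=> h; have := c3 _ h; rewrite -addnS prednK // hz modnDr -hz.
have : \sum_(i < m) (g i.+1 - g i) <= \sum_(i < m) (`|d i| - `|z i|) by apply: ler_sum => i _; exact: key.
rewrite -(big_mkord xpredT (fun i => g i.+1 - g i)) telescope_sumr // sumrB.
have -> : g m = g 0%N.
  rewrite /g add0n cp modnn; congr Af; rewrite hz -{1}(mul1n m) modnMDl -hz //.
by rewrite subrr subr_ge0.
Qed.

Lemma valbound r m (x : nat -> int) : (0 < m)%N -> (1 <= r)%N -> per m x -> cycOK r x ->
  (2 * r%:Z - 1) * `|\sum_(i < m) x i * ((2 * r)%:Z) ^+ i| < r%:Z * (((2 * r)%:Z) ^+ m - 1).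
Proof.
move=> hm hr hx [c1 c2 c3].
set K := (2 * r)%:Z; set R := r%:Z.
have hK : K = 2 * R by rewrite /K /R PoszM.
set S := \sum_(i < m) K ^+ i.
have hS : (2 * R - 1) * S = K ^+ m - 1 by rewrite -geo hK.
have [j hj hxj] : exists2 j, (j < m)%N & `|x j| < R.
  case: (ltP `|x 0%N| R) => h0; first by exists 0%N.
  have h0' : x 0%N = R \/ x 0%N = - R by have := c1 0%N; rewrite /R; lia.
  have h1 : `|x 1%N| < R.
    case: h0' => h; [have := c2 _ h | have := c3 _ h]; rewrite /R; lia.
  case: (ltnP 1 m) => hm1; first by exists 1%N.
  have em : m = 1%N by lia.
  by move: h1; rewrite hx em modnn; lia.
have hlt : \sum_(i < m) `|x i| * K ^+ i < R * S.
  rewrite /S mulr_sumr -subr_gt0 -sumrB (bigD1 (Ordinal hj)) //=.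
  have hpos : 0 < (R - `|x j|) * K ^+ j.
    by apply: mulr_gt0; [rewrite subr_gt0 | rewrite exprn_gt0 // hK /R; lia].
  have hrest : 0 <= \sum_(i < m | i != Ordinal hj) (R * K ^+ i - `|x i| * K ^+ i).
    apply: sumr_ge0 => i _; rewrite -mulrBl; apply: mulr_ge0.
      by rewrite subr_ge0 c1.
    by rewrite exprn_ge0 // hK /R; lia.
  move: hpos hrest; rewrite mulrBl; set A := \sum_(i < m | _) _; lia.
have hle : `|\sum_(i < m) x i * K ^+ i| <= \sum_(i < m) `|x i| * K ^+ i.
  apply: le_trans (ler_norm_sum _ _ _) _; apply: ler_sum => i _.
  by rewrite normrM normrX (@ger0_norm _ K) // hK /R; lia.
have hR1 : 1 <= 2 * R - 1 by rewrite /R; lia.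
rewrite -hS mulrCA ltr_pM2l; last lia.
exact: le_lt_trans hle hlt.
Qed.

Lemma noone r m (x y c : nat -> int) : (0 < m)%N -> (1 <= r)%N ->
  cycOK r x -> cycOK r y -> NotAlt r y -> per m c ->
  (forall i, (2 * r)%:Z * c i.+1 = c i + x i - y i) ->
  (forall i, `|c i| <= 1) -> forall i, c i <> 1.
Proof.
move=> hm hr [x1 x2 x3] [y1 y2 y3] hna hc hrel hb.
have hK : (2 * r)%:Z = 2 * r%:Z by rewrite PoszM.
have step : forall i, c i.+1 = 1 -> c i = 1.
  move=> i hi; have e := hrel i; rewrite hi hK in e.
  have := x1 i; have := y1 i; have := hb i => b1 b2 b3.
  have [h0|hm1] : c i = 0 \/ c i = 1 \/ c i = -1 by lia.
  - have hxi : x i = r%:Z by lia.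
    have hyi : y i = - r%:Z by lia.
    have := x2 _ hxi; have := y3 _ hyi; have e2 := hrel i.+1.
    rewrite hi hK in e2.
    have : c i.+2 = -1 \/ c i.+2 = 0 \/ c i.+2 = 1 by have := hb i.+2; lia.
    case=> [h|[h|h]]; rewrite h in e2; lia.
  - lia.
have down : forall n i, c (i + n)%N = 1 -> c i = 1.
  elim=> [|n IH] i; first by rewrite addn0.
  by rewrite addnS => /step; apply: IH.
move=> j hj.
have all1 : forall i, c i = 1.
  move=> i.
  have hJ : c (j %% m + i * m)%N = 1 by rewrite hc addnC modnMDl modn_mod -hc.
  apply: (down (j %% m + i * m - i)%N).
  rewrite subnKC //; apply: leq_trans (leq_addl _ _); by rewrite leq_pmulr.
apply: hna => i.
have ei := hrel i; have ei1 := hrel i.+1.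
rewrite !all1 hK in ei ei1.
have := x1 i; have := y1 i; have := x1 i.+1; have := y1 i.+1 => b1 b2 b3 b4.
have hy : y i = - r%:Z \/ y i = 1 - r%:Z by lia.
split=> //.
case: hy => hy.
- have := y3 _ hy; lia.
- have hxi : x i = r%:Z by lia.
  have := x2 _ hxi; lia.
Qed.

Lemma unique r m (x y : nat -> int) : (0 < m)%N -> (1 <= r)%N ->
  per m x -> per m y -> cycOK r x -> cycOK r y -> NotAlt r x -> NotAlt r y ->
  eqm (((2 * r)%:Z) ^+ m - 1) (\sum_(i < m) x i * ((2 * r)%:Z) ^+ i)
                             (\sum_(i < m) y i * ((2 * r)%:Z) ^+ i) ->
  forall i, x i = y i.
Proof.
move=> hm hr hx hy okx oky nax nay [q hq].
have bx := valbound hm hr hx okx; have by_ := valbound hm hr hy oky.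
move: bx by_ hq.
set K := (2 * r)%:Z; set R := r%:Z; set N := K ^+ m - 1.
set X := \sum_(i < m) x i * K ^+ i; set Y := \sum_(i < m) y i * K ^+ i.
move=> bx by_ hq.
have hK : K = 2 * R by rewrite /K /R PoszM.
have hN : 0 < N.
  rewrite /N subr_gt0; have -> : (1 : int) = 1 ^+ m by rewrite expr1n.
  by rewrite ltrXn2r ?lt0n -?lt0n // ?hK /R; lia.
have hq1 : `|q| <= 1.
  have e : `|q| * N = `|X - Y| by rewrite hq normrM (@gtr0_norm _ N).
  have t : `|X - Y| <= `|X| + `|Y| by apply: ler_normB.
  rewrite leNgt; apply/negP => hq2.
  have : (2 * R - 1) * (`|q| * N) < 2 * R * N.
    rewrite e; apply: le_lt_trans (_ : (2 * R - 1) * (`|X| + `|Y|) < _).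
      by rewrite ler_pM2l // /R; lia.
    by move: bx by_; rewrite /R; lia.
  have : (2 * R - 1) * 2 * N <= (2 * R - 1) * `|q| * N.
    by rewrite ler_pM2r // ler_pM2l // /R; lia.
  move: hN; rewrite /R; nia.
have hs : \sum_(i < m) (x i - y i) * K ^+ i = q * N.
  by rewrite -hq -sumrB; apply: eq_bigr => i _; rewrite mulrBl.
have [c [c0 cp crel]] := carries (d := fun i => x i - y i) hm hs.
have crelA : forall i, K * c i.+1 = c i + x i - y i.
  move=> i; have := crel _ (ltn_pmod i hm).
  have e1 : c (i %% m).+1 = c i.+1.
    by rewrite cp [in RHS]cp -[(i %% m).+1]addn1 modnDml addn1.
  by rewrite e1 -hx -hy -cp => ->; ring.
have cb : forall i, `|c i| <= 1.
  elim=> [|i IH]; first by rewrite c0.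
  have e := crelA i; have := okx; have := oky => -[y1 _ _] [x1 _ _].
  have := x1 i; have := y1 i; move: e; rewrite hK /R.
  have [h|h] : `|c i.+1| <= 1 \/ 2 <= `|c i.+1| by lia.
    by [].
  nia.
have n1 := noone hm hr okx oky nay cp crelA cb.
have n2 : forall i, - c i <> 1.
  apply: (noone hm hr oky okx nax) => //.
  - by move=> i; rewrite /= -cp.
  - by move=> i; rewrite mulrN crelA; ring.
  - by move=> i; rewrite normrN.
move=> i; have := crelA i; have := n1 i; have := n1 i.+1; have := n2 i; have := n2 i.+1.
have := cb i; have := cb i.+1; rewrite hK; nia.
Qed.

Definition xf (m : nat) (xs : seq int) (i : nat) : int := nth 0 xs (i %% m).

Lemma predm m i : (0 < m)%N -> ((i.+1 %% m + m - 1) %% m = i %% m)%N.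
Proof.
move=> hm; rewrite -addnBA // subn1 modnDml.
by rewrite addSnnS prednK // modnDr.
Qed.

Lemma xf_per m xs : per m (xf m xs).
Proof. by move=> i; rewrite /xf modn_mod. Qed.

Lemma Am_cyc r m xs : (0 < m)%N -> Am_exps r m xs ->
  [/\ per m (xf m xs), cycOK r (xf m xs) & NotAlt r (xf m xs)].
Proof.
move=> hm [hs a1 a2 a3]; split; first exact: xf_per.
- split.
  + by move=> i; apply: a1; rewrite ltn_pmod.
  + move=> i hi; have [h _] := a2 _ (ltn_pmod i.+1 hm).
    by apply: h; rewrite predm.
  + move=> i hi; have [_ h] := a2 _ (ltn_pmod i.+1 hm).
    by apply: h; rewrite predm.
- move=> H; set f := xf m xs in H.
  have hf : forall i, f i = if odd i then 1 - 2 * r%:Z - f 0%N else f 0%N.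
    elim=> [|i IH] //=; have [_ e] := H i; rewrite IH in e.
    by case: (odd i) e => /=; lia.
  have hodd : ~~ odd m.
    apply/negP => ho; have := hf m; rewrite ho /f /xf modnn mod0n.
    by have [_ ] := H 0%N; have [[h|h] _] := H 0%N; lia.
  have [n1 n2] := a3 hodd.
  have [[h0|h0] _] := H 0%N.
  + apply: n2; apply: (@eq_from_nth _ 0); rewrite ?size_mkseq // => i; rewrite hs => hi.
    rewrite nth_mkseq //; have := hf i; rewrite /f /xf (modn_small hi) mod0n.
    rewrite /f /xf mod0n in h0; rewrite h0.
    by case: (odd i) => ->; lia.
  + apply: n1; apply: (@eq_from_nth _ 0); rewrite ?size_mkseq // => i; rewrite hs => hi.
    rewrite nth_mkseq //; have := hf i; rewrite /f /xf (modn_small hi) mod0n.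
    rewrite /f /xf mod0n in h0; rewrite h0.
    by case: (odd i) => ->; lia.
Qed.

Lemma nth_rot_mod (T : Type) (x0 : T) (s : seq T) n i :
  (n <= size s)%N -> (i < size s)%N -> nth x0 (rot n s) i = nth x0 s ((i + n) %% size s).
Proof.
move=> hn hi; rewrite /rot nth_cat size_drop.
case: ltnP => h.
- rewrite nth_drop modn_small; last lia.
  by rewrite addnC.
- rewrite nth_take; last lia.
  have -> : (i + n = (i - (size s - n)) + size s)%N by lia.
  by rewrite modnDr modn_small //; lia.
Qed.

Lemma shift_sum m (F : nat -> int) n : (forall i, F (i + m)%N = F i) ->
  \sum_(i < m) F (i + n)%N = \sum_(i < m) F i.
Proof.
move=> hF; elim: n => [|n IH].
  by apply: eq_bigr => i _; rewrite addn0.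
rewrite -IH; apply/eqP; rewrite -subr_eq0 -sumrB.
rewrite (eq_bigr (fun i : 'I_m => (fun j => F (j + n)%N) (nat_of_ord i).+1 - (fun j => F (j + n)%N) i)).
  rewrite -(big_mkord xpredT (fun i => (fun j => F (j + n)%N) i.+1 - (fun j => F (j + n)%N) i)).
  by rewrite telescope_sumr // /= add0n addnC hF subrr.
by move=> i _; rewrite addSnnS.
Qed.

Lemma Bv_wordof_xf K m h xs : size xs = m ->
  Bv K m h (wordof xs) = \sum_(i < m) xf m xs i * K ^+ ((h + i) %% m).
Proof.
move=> hs; rewrite Bv_wordof; move: hs => <-.
by apply: eq_bigr => i _; rewrite /xf (modn_small (ltn_ord i)).
Qed.

Lemma conj_core r m xs u v : (0 < m)%N -> size xs = m ->
  bs_eq (2 * r) (u ++ wordof xs ++ winv u) v ->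
  exists2 n, (n < m)%N &
    eqm (((2 * r)%:Z) ^+ m - 1) (Bv (2 * r)%:Z m 0 v)
        (\sum_(i < m) xf m xs (i + n) * ((2 * r)%:Z) ^+ i) /\ tsum v = m%:Z.
Proof.
move=> hm hs H.
have [h1 _ h3] := bs_sound hm H.
have [c1 _ _] := bs_sound (r := r) hm (bs_cancel (2 * r) u).
set K := (2 * r)%:Z in h1 c1 *.
set h := hoff m u.
exists ((m - h %% m) %% m)%N; first by rewrite ltn_pmod.
split; last by rewrite -h3 !tsum_cat tsum_winv tsum_wordof hs; ring.
apply: (eqm_trans (eqm_sym (h1 0%N))).
have bsh : forall h' w', Bv K m (h' + m) w' = Bv K m h' w'.
  by move=> h' w'; rewrite Bv_mod modnDr -Bv_mod.
rewrite !Bv_cat !add0n hoff_wordof hs bsh.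
have := c1 0%N; rewrite Bv_cat add0n /= -/h => c0.
have e : forall a b c : int, a + (b + c) = b + (a + c) by move=> a b c; ring.
rewrite e; apply: eqm_sym.
rewrite -[X in eqm _ X _]addr0; apply: eqmD; last exact: eqm_sym c0.
rewrite Bv_wordof_xf //.
set n := ((m - h %% m) %% m)%N.
have hn : ((h + n) %% m = 0)%N.
  rewrite /n modnDmr -modnDml subnKC ?modnn //.
  by apply: ltnW; rewrite ltn_pmod.
rewrite -(shift_sum (F := fun i => xf m xs i * K ^+ ((h + i) %% m)) n).
  apply: eqm_eq; apply: eq_bigr => i _.
  by rewrite addnCA -modnDmr hn addn0 modn_small.
by move=> i; rewrite /xf addnA !modnDr.
Qed.

Lemma shift_ok r m n (f : nat -> int) : (0 < m)%N -> (n < m)%N -> per m f -> cycOK r f -> NotAlt r f ->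
  [/\ per m (fun i => f (i + n)%N), cycOK r (fun i => f (i + n)%N) & NotAlt r (fun i => f (i + n)%N)].
Proof.
move=> hm hn hp [o1 o2 o3] na; split.
- by move=> i /=; rewrite hp [in RHS]hp modnDml.
- split.
  + by move=> i; apply: o1.
  + by move=> i /= h; apply: o2 h.
  + by move=> i /= h; apply: o3 h.
- move=> H; apply: na => i.
  have [e1 e2] := H (i + m - n)%N.
  have ea : (i + m - n + n = i + m)%N by lia.
  have a1 : f (i + m - n + n)%N = f i by rewrite ea hp modnDr -hp.
  have a2 : f ((i + m - n).+1 + n)%N = f i.+1.
    by rewrite addSn ea -addSn hp modnDr -hp.
  by move: e1 e2 => /=; rewrite a1 a2.
Qed.

Lemma conj_min r m xs v : (0 < m)%N -> (1 <= r)%N -> Am_exps r m xs ->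
  conj_words (2 * r) (wordof xs) v -> (size (wordof xs) <= size v)%N.
Proof.
move=> hm hr hA [u H].
have hs : size xs = m by case: hA.
have [hp ok na] := Am_cyc hm hA.
have [n hn [he ht]] := conj_core hm hs H.
have [hp' ok' _] := shift_ok hm hn hp ok na.
rewrite (Bv_dg _ _ _ hm) in he.
have := minimal hm hr hp' ok' he.
rewrite (shift_sum (F := fun i => `|xf m xs i|)); last by move=> i; rewrite /xf modnDr.
have := dg_cost 0 v hm; have := size_ge v; have := size_wordof xs.
rewrite hs ht.
rewrite (eq_bigr (fun i : 'I_m => `|xf m xs i|)); last first.
  by move=> i _; rewrite /xf modn_small.
set A := \sum_(i < m) `|xf m xs i|; set B := \sum_(i < m) `|dg m 0 v i|.
lia.
Qed.

Local Close Scope ring_scope.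

Theorem lemma4p5 (r m : nat) (hr : 1 <= r) (hm : 0 < m) :
  (forall w1 w2 : word, Am r m w1 -> Am r m w2 ->
     (conj_words (2 * r) w1 w2 <-> cyc_perm w1 w2)) /\
  (forall w : word, Am r m w -> conj_geodesic (2 * r) w).
Proof.
split.
- move=> w1 w2 [xs [hA ->]] [ys [hB ->]]; split; last exact: cyc_conj.
  case=> u H.
  have hs : size xs = m by case: hA.
  have hs' : size ys = m by case: hB.
  have [hp ok na] := Am_cyc hm hA.
  have [hp2 ok2 na2] := Am_cyc hm hB.
  have [n hn [he _]] := conj_core hm hs H.
  have [hp' ok' na'] := shift_ok hm hn hp ok na.
  rewrite Bv_wordof_xf // in he.
  have he' : eqm (((2 * r)%:Z) ^+ m - 1)%R
      (\sum_(i < m) (fun i => xf m xs (i + n)) i * ((2 * r)%:Z) ^+ i)%R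
      (\sum_(i < m) xf m ys i * ((2 * r)%:Z) ^+ i)%R.
    apply: eqm_sym; apply: eqm_trans he; apply: eqm_eq.
    by apply: eq_bigr => i _; rewrite add0n modn_small.
  have hu := unique hm hr hp' hp2 ok' ok2 na' na2 he'.
  exists (size (wordof (take n xs))); rewrite -wordof_rot; congr wordof.
  apply: (@eq_from_nth _ 0%R); first by rewrite size_rot hs hs'.
  move=> i; rewrite hs' => hi.
  rewrite nth_rot_mod ?hs //; last exact: ltnW.
  by have := hu i; rewrite /= /xf (modn_small hi) => ->.
- move=> w [xs [hA ->]]; split.
  + move=> v H; apply: conj_min hm hr hA _.
    by exists [::]; rewrite /winv /= cats0.
  + by move=> v H; apply: conj_min hm hr hA H.
Qed.
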